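(* Let $A\in\mathrm{SL}(2,\mathbb Z)$ and let $W_0=V_0,V_1,\dots,V_m=AW_0$, $m=c(A)$, be the shortest path from $W_0$ to $AW_0$ in $\Gamma$. If $c(A)\le1$, then $A$ is a minimal matrix. If $c(A)>1$, then $A$ is a minimal matrix if and only if $V_{m-1}\ne AV_1$.
   Context: Admissible hexagons are the sets $\{\pm a,\pm b,\pm(a+b)\}\subset\mathbb Z^2$ with $(a,b)$ a basis of $\mathbb Z^2$ (corresponding to isotopy classes of $\theta$-curves in $T^2$). $\Gamma$ is the graph on admissible hexagons, two adjacent iff they share two opposite pairs of vertices $\pm\sigma,\pm\mu$ (a flip); it is a trivalent tree with graph distance $d$, acted on by $\mathrm{SL}(2,\mathbb Z)$. $W_0=\{\pm(1,0),\pm(0,1),\pm(1,-1)\}$ and $c(A)=d(W_0,AW_0)$. For the operator $\mathcal A$ on $\mathbb Z^2$ given by $A$, $c(\mathcal A)=\min_{B\in\mathrm{SL}(2,\mathbb Z)}c(B^{-1}AB)$; a matrix $A$ is minimal if $c(A)=c(\mathcal A)$, i.e. $c(A)\le c(B^{-1}AB)$ for all $B\in\mathrm{SL}(2,\mathbb Z)$. *)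

(* Defs.v *)
From HB Require Import structures.
From mathcomp Require Import all_boot all_order all_algebra.
From mathcomp Require Import finmap.
Set Implicit Arguments. Unset Strict Implicit. Unset Printing Implicit Defensive.
Import Order.TTheory GRing.Theory Num.Theory.
Local Open Scope ring_scope.


Definition vec := 'cV[int]_2.

Definition vec2 (x y : int) : vec := \col_i (if i == 0 then x else y).

Definition is_basis (a b : vec) : Prop :=
  (forall v : vec, exists x y : int, v = x *: a + y *: b) /\
  (forall x y : int, x *: a + y *: b = 0 -> x = 0 /\ y = 0).

Definition hexagon := {fset vec}.

Definition hex_list (a b : vec) : seq vec := [:: a; -a; b; -b; a + b; -(a + b)].

Definition hex (a b : vec) : hexagon := [fset x | x in hex_list a b]%fset.

Definition admissible (H : hexagon) : Prop :=
  exists a b : vec, is_basis a b /\ H = hex a b.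

Definition adjacent (H H' : hexagon) : Prop :=
  admissible H /\ admissible H' /\ H <> H' /\
  exists sigma mu : vec,
    mu <> sigma /\ mu <> - sigma /\
    sigma \in H /\ - sigma \in H /\ mu \in H /\ - mu \in H /\
    sigma \in H' /\ - sigma \in H' /\ mu \in H' /\ - mu \in H'.

(* A walk in Gamma starting at H: the sequence of the following vertices. *)
Definition walk (H : hexagon) (s : seq hexagon) : Prop :=
  admissible H /\
  forall i, (i < size s)%N -> adjacent (nth H (H :: s) i) (nth H (H :: s) i.+1).

Definition walk_between (H H' : hexagon) (s : seq hexagon) : Prop :=
  walk H s /\ last H s = H'.

Definition act (A : 'M[int]_2) (H : hexagon) : hexagon :=
  [fset A *m v | v in H]%fset.

Definition W0_list : seq vec :=
  [:: vec2 1 0; - vec2 1 0; vec2 0 1; - vec2 0 1; vec2 1 (-1); - vec2 1 (-1)].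

Definition W0 : hexagon := [fset x | x in W0_list]%fset.

Definition SL2 (A : 'M[int]_2) : Prop := \det A = 1.

Definition geodesic (H H' : hexagon) (s : seq hexagon) : Prop :=
  walk_between H H' s /\
  forall t, walk_between H H' t -> (size s <= size t)%N.

(* c(A) <= c(A') for the distances c(A) = d(W0, A W0), written out:
   every walk from W0 to A' W0 is at least as long as some walk from
   W0 to A W0. *)
Definition c_le (A A' : 'M[int]_2) : Prop :=
  forall t, walk_between W0 (act A' W0) t ->
    exists s, walk_between W0 (act A W0) s /\ (size s <= size t)%N.

Definition minimal (A : 'M[int]_2) : Prop :=
  forall B : 'M[int]_2, SL2 B -> c_le A (invmx B *m A *m B).

(* Main.v *)
Require Import Defs.
From HB Require Import structures.
From mathcomp Require Import all_boot all_order all_algebra.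
From mathcomp Require Import finmap.
From Stdlib Require Import ClassicalEpsilon.
From mathcomp Require Import zify ring lra.
Set Implicit Arguments. Unset Strict Implicit. Unset Printing Implicit Defensive.
Import Order.TTheory GRing.Theory Num.Theory.
Local Open Scope ring_scope.


Definition c0 (v : vec) : int := v 0 0.
Definition c1 (v : vec) : int := v 1 0.

Lemma vecP (u v : vec) : u = v <-> c0 u = c0 v /\ c1 u = c1 v.
Proof.
split=> [->//|[h0 h1]]; apply/matrixP=> i j; rewrite [j]ord1.
case: i => [[|[|//]] Hi].
- by have -> : Ordinal Hi = 0 by apply/val_inj.
- by have -> : Ordinal Hi = 1 by apply/val_inj.
Qed.

Lemma c0D (u v : vec) : c0 (u + v) = c0 u + c0 v. Proof. by rewrite /c0 mxE. Qed.
Lemma c1D (u v : vec) : c1 (u + v) = c1 u + c1 v. Proof. by rewrite /c1 mxE. Qed.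
Lemma c0N (u : vec) : c0 (- u) = - c0 u. Proof. by rewrite /c0 mxE. Qed.
Lemma c1N (u : vec) : c1 (- u) = - c1 u. Proof. by rewrite /c1 mxE. Qed.
Lemma c0Z x (u : vec) : c0 (x *: u) = x * c0 u. Proof. by rewrite /c0 mxE. Qed.
Lemma c1Z x (u : vec) : c1 (x *: u) = x * c1 u. Proof. by rewrite /c1 mxE. Qed.
Lemma c00 : c0 0 = 0. Proof. by rewrite /c0 mxE. Qed.
Lemma c10 : c1 0 = 0. Proof. by rewrite /c1 mxE. Qed.
Lemma c0v2 x y : c0 (vec2 x y) = x. Proof. by rewrite /c0 mxE. Qed.
Lemma c1v2 x y : c1 (vec2 x y) = y. Proof. by rewrite /c1 mxE. Qed.
Lemma c0M (M : 'M[int]_2) (u : vec) : c0 (M *m u) = M 0 0 * c0 u + M 0 1 * c1 u.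
Proof.
rewrite /c0 /c1 mxE !big_ord_recl big_ord0 addr0.
by have -> : lift ord0 ord0 = 1 :> 'I_2 by apply/val_inj.
Qed.
Lemma c1M (M : 'M[int]_2) (u : vec) : c1 (M *m u) = M 1 0 * c0 u + M 1 1 * c1 u.
Proof.
rewrite /c0 /c1 mxE !big_ord_recl big_ord0 addr0.
by have -> : lift ord0 ord0 = 1 :> 'I_2 by apply/val_inj.
Qed.

Definition cE := (c0D, c1D, c0N, c1N, c0Z, c1Z, c00, c10, c0v2, c1v2, c0M, c1M).

Lemma det22 (M : 'M[int]_2) : \det M = M 0 0 * M 1 1 - M 0 1 * M 1 0.
Proof.
rewrite (expand_det_row _ 0) !big_ord_recl big_ord0 /cofactor !det_mx11 !mxE /=.
have h1 : forall i : 'I_2, nat_of_ord i = 1%N -> i = 1 by move=> i hi; apply/val_inj.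
have h0 : forall i : 'I_2, nat_of_ord i = 0%N -> i = 0 by move=> i hi; apply/val_inj.
rewrite (h1 (lift 0 0)) // (h0 (lift 1 0)) //.
rewrite /= expr0 expr1 !mul1r addr0 mulN1r mulrN. by [].
Qed.

Definition det2 (a b : vec) : int := c0 a * c1 b - c1 a * c0 b.
Definition basis2 a b := det2 a b = 1 \/ det2 a b = -1.

Lemma mem_hex a b v : (v \in hex a b) = (v \in hex_list a b).
Proof. by rewrite /hex in_fset. Qed.

Lemma eqvE (u v : vec) : (u == v) = (c0 u == c0 v) && (c1 u == c1 v).
Proof.
apply/eqP/andP => [->//|[/eqP h0 /eqP h1]]; exact/vecP.
Qed.

Lemma memhexE a b v : (v \in hex a b) =
  [|| (c0 v == c0 a) && (c1 v == c1 a), (c0 v == - c0 a) && (c1 v == - c1 a),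
      (c0 v == c0 b) && (c1 v == c1 b), (c0 v == - c0 b) && (c1 v == - c1 b),
      (c0 v == c0 a + c0 b) && (c1 v == c1 a + c1 b) |
      (c0 v == - (c0 a + c0 b)) && (c1 v == - (c1 a + c1 b))].
Proof. by rewrite mem_hex !inE !eqvE !cE. Qed.


Lemma intunit (d e : int) : d * e = 1 -> d = 1 \/ d = -1.
Proof.
move=> h.
have : d <= -2 \/ d = -1 \/ d = 0 \/ d = 1 \/ 2 <= d by lia.
have : e <= -1 \/ e = 0 \/ 1 <= e by lia.
case=> [he|[he|he]]; case=> [hd|[hd|[hd|[hd|hd]]]]; try by [left|right]; 
  try (rewrite he in h); try (rewrite hd in h); nia.
Qed.

Lemma basisP a b : is_basis a b <-> basis2 a b.
Proof.
rewrite /basis2 /det2; split.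
  case=> [ex _].
  have [x1 [y1 /vecP]] := ex (vec2 1 0).
  have [x2 [y2 /vecP]] := ex (vec2 0 1).
  rewrite !cE => -[h1 h2] [h3 h4].
  apply: (@intunit _ (x1 * y2 - x2 * y1)).
  nia.
move=> hd; split.
  move=> v.
  pose d := c0 a * c1 b - c1 a * c0 b.
  exists (d * (c0 v * c1 b - c1 v * c0 b)), (d * (c0 a * c1 v - c1 a * c0 v)).
  have e0 : d * d = 1 by rewrite /d; case: hd => ->.
  apply/vecP; rewrite !cE; split;
    [transitivity (d*(d*c0 v)) | transitivity (d*(d*c1 v))];
    try (by rewrite mulrA e0 mul1r); rewrite /d; ring.
move=> x y /vecP; rewrite !cE => -[h1 h2].
have ex : x * (c0 a * c1 b - c1 a * c0 b) = 0.
  transitivity ((x * c0 a + y * c0 b) * c1 b - (x * c1 a + y * c1 b) * c0 b); first ring.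
  by rewrite h1 h2; ring.
have ey : y * (c0 a * c1 b - c1 a * c0 b) = 0.
  transitivity ((x * c1 a + y * c1 b) * c0 a - (x * c0 a + y * c0 b) * c1 a); first ring.
  by rewrite h1 h2; ring.
by case: hd => hd; rewrite hd in ex ey; lia.
Qed.

Lemma hexN a b v : v \in hex a b -> - v \in hex a b.
Proof. rewrite !memhexE !cE; lia. Qed.

Lemma hex_sub a b c d : c \in hex a b -> d \in hex a b -> (c + d) \in hex a b ->
  forall v, v \in hex c d -> v \in hex a b.
Proof.
move=> hc hd hcd v; rewrite mem_hex /hex_list !in_cons in_nil orbF.
by case/orP=> [/eqP->|/orP[/eqP->|/orP[/eqP->|/orP[/eqP->|/orP[/eqP->|/eqP->]]]]];
  try apply: hexN.
Qed.

Lemma hex_eqI a b c d : c \in hex a b -> d \in hex a b -> (c + d) \in hex a b ->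
  a \in hex c d -> b \in hex c d -> (a + b) \in hex c d -> hex a b = hex c d.
Proof.
move=> *; apply/fsetP => v; apply/idP/idP; exact: hex_sub.
Qed.


Definition S6 : seq (int * int) := [:: (1,0); (-1,0); (0,1); (0,-1); (1,1); (-1,-1)].
Definition lc (a b : vec) (p : int * int) : vec := p.1 *: a + p.2 *: b.
Definition padd (p q : int * int) : int * int := (p.1 + q.1, p.2 + q.2).
Definition pneg (p : int * int) : int * int := (- p.1, - p.2).
Definition comb (p q g : int * int) : int * int := (g.1 * p.1 + g.2 * q.1, g.1 * p.2 + g.2 * q.2).

Lemma lcD a b p q : lc a b p + lc a b q = lc a b (padd p q).
Proof. apply/vecP; rewrite /lc /padd /= !cE; split; ring. Qed.
Lemma lcN a b p : - lc a b p = lc a b (pneg p).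
Proof. apply/vecP; rewrite /lc /pneg /= !cE; split; ring. Qed.
Lemma lc_comb a b p q g : lc (lc a b p) (lc a b q) g = lc a b (comb p q g).
Proof. apply/vecP; rewrite /lc /comb /= !cE; split; ring. Qed.
Lemma lc10 a b : lc a b (1,0) = a.
Proof. apply/vecP; rewrite /lc /= !cE; split; ring. Qed.
Lemma lc01 a b : lc a b (0,1) = b.
Proof. apply/vecP; rewrite /lc /= !cE; split; ring. Qed.
Lemma lc11 a b : lc a b (1,1) = a + b.
Proof. apply/vecP; rewrite /lc /= !cE; split; ring. Qed.

Lemma mem_lc a b r : r \in S6 -> lc a b r \in hex a b.
Proof.
rewrite !in_cons in_nil orbF => /orP[/eqP->|/orP[/eqP->|/orP[/eqP->|/orP[/eqP->|/orP[/eqP->|/eqP->]]]]];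
 rewrite memhexE /lc /= !cE; lia.
Qed.

Lemma hex_lc_mem a b v : v \in hex a b -> exists2 r, r \in S6 & v = lc a b r.
Proof.
rewrite mem_hex /hex_list !in_cons in_nil orbF.
case/orP=> [/eqP->|/orP[/eqP->|/orP[/eqP->|/orP[/eqP->|/orP[/eqP->|/eqP->]]]]].
- by exists (1,0) => //; rewrite lc10.
- by exists (-1,0) => //; rewrite -{1}(lc10 a b) lcN.
- by exists (0,1) => //; rewrite lc01.
- by exists (0,-1) => //; rewrite -{1}(lc01 a b) lcN.
- by exists (1,1) => //; rewrite lc11.
- by exists (-1,-1) => //; rewrite -(lc11 a b) lcN.
Qed.

Lemma lc_inj a b p q : basis2 a b -> lc a b p = lc a b q -> p = q.
Proof.
move=> /basisP [_ hu] e.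
have := hu (p.1 - q.1) (p.2 - q.2).
case.
  apply/vecP; move/vecP: e; rewrite /lc !cE => -[e1 e2]; split; lia.
move=> h1 h2; case: p q {e} h1 h2 => [p1 p2] [q1 q2] /= h1 h2.
congr pair; lia.
Qed.

Lemma lc_mem a b r : basis2 a b -> lc a b r \in hex a b -> r \in S6.
Proof.
move=> hb /hex_lc_mem [r' hr' e].
by rewrite (lc_inj hb e).
Qed.

Lemma det2_lc a b p q : det2 (lc a b p) (lc a b q) = (p.1 * q.2 - p.2 * q.1) * det2 a b.
Proof. rewrite /det2 /lc !cE; ring. Qed.

Lemma hex_eq_lc a b p q :
  [&& p \in S6, q \in S6, padd p q \in S6,
      has (fun g => comb p q g == (1,0)) S6,
      has (fun g => comb p q g == (0,1)) S6 &
      has (fun g => comb p q g == (1,1)) S6] ->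
  hex a b = hex (lc a b p) (lc a b q).
Proof.
case/and5P=> hp hq hpq h1 /andP[h2 h3].
apply: hex_eqI; rewrite ?lcD; try exact: mem_lc.
- case/hasP: h1 => g hg /eqP e; rewrite -{1}(lc10 a b) -e -lc_comb; exact: mem_lc.
- case/hasP: h2 => g hg /eqP e; rewrite -{1}(lc01 a b) -e -lc_comb; exact: mem_lc.
- case/hasP: h3 => g hg /eqP e; rewrite -(lc11 a b) -e -lc_comb; exact: mem_lc.
Qed.

Ltac s6case h := move: h; rewrite !in_cons in_nil orbF =>
  /orP[/eqP->|/orP[/eqP->|/orP[/eqP->|/orP[/eqP->|/orP[/eqP->|/eqP->]]]]].

Lemma hexK a b s m : basis2 a b -> s \in hex a b -> m \in hex a b -> m != s -> m != - s ->
  basis2 s m /\ (hex a b = hex s m \/ hex a b = hex s (- m)).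
Proof.
move=> hb /hex_lc_mem [p hp ->] /hex_lc_mem [q hq ->]; rewrite lcN.
s6case hp; s6case hq; rewrite ?eqxx // => _ _; rewrite /basis2 det2_lc lcN.
all: split; [by case: hb => ->; first [by left | by right] | ].
all: first [ by left; apply: hex_eq_lc | by right; apply: hex_eq_lc ].
Qed.

Lemma det2N a b : det2 a (- b) = - det2 a b.
Proof. rewrite /det2 !cE; ring. Qed.
Lemma basis2N a b : basis2 a b -> basis2 a (- b).
Proof. rewrite /basis2 det2N; lia. Qed.
Lemma basis2_neq a b : basis2 a b -> b != a /\ b != - a.
Proof.
rewrite /basis2 /det2 !eqvE !cE => h; split; apply/negP; nia.
Qed.

Lemma lc_flip a b p : lc a b p = lc a (- b) (p.1, - p.2).
Proof. apply/vecP; rewrite /lc /= !cE; split; ring. Qed.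

Lemma adjE H H' : adjacent H H' <->
  exists x y, basis2 x y /\ H = hex x y /\ H' = hex x (- y).
Proof.
split.
  case=> [[a [b [/basisP hab ->]]] [[c [d [/basisP hcd ->]]] [hne [s [m HH]]]]].
  case: HH => n1 [n2 [h1 [_ [h3 [_ [h5 [_ [h7 _]]]]]]]].
  have n1' : m != s by apply/eqP.
  have n2' : m != - s by apply/eqP.
  have [bsm e1] := hexK hab h1 h3 n1' n2'.
  have [_ e2] := hexK hcd h5 h7 n1' n2'.
  case: e1 => e1; case: e2 => e2; rewrite e1 e2 in hne *; try by [].
    by exists s, m; split.
  by exists s, (- m); rewrite opprK; split => //; apply: basis2N.
case=> [x [y [hb [-> ->]]]].
have [n1 n2] := basis2_neq hb.
split; first by exists x, y; split => //; apply/basisP.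
split; first by exists x, (- y); split => //; apply/basisP; apply: basis2N.
split.
  move=> e.
  have : lc x (- y) (1, -1) \in hex x (- y).
    rewrite -e.
    have -> : lc x (- y) (1, -1) = x + y by apply/vecP; rewrite /lc !cE /=; split; ring.
    by rewrite memhexE !cE; lia.
  by move/(lc_mem (basis2N hb)).
exists x, y; split; first exact/eqP.
split; first exact/eqP.
by rewrite !memhexE ?cE; lia.
Qed.

Definition Q (v : vec) : int := c0 v * c0 v + c0 v * c1 v + c1 v * c1 v.
Definition Bf (u v : vec) : int :=
  2 * c0 u * c0 v + c0 u * c1 v + c1 u * c0 v + 2 * c1 u * c1 v.
Definition F (H : hexagon) : int := \sum_(v <- H) Q v.

Lemma QN v : Q (- v) = Q v. Proof. rewrite /Q !cE; ring. Qed.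
Lemma QD u v : Q (u + v) = Q u + Q v + Bf u v. Proof. rewrite /Q /Bf !cE; ring. Qed.
Lemma QDN u v : Q (u + - v) = Q u + Q v - Bf u v. Proof. rewrite /Q /Bf !cE; ring. Qed.
Lemma QB_id u v : 4 * (Q u * Q v) - Bf u v * Bf u v = 3 * (det2 u v * det2 u v).
Proof. rewrite /Q /Bf /det2; ring. Qed.
Lemma Q_ge0 v : 0 <= Q v. Proof. rewrite /Q; nia. Qed.
Lemma BfN u v : Bf u (- v) = - Bf u v. Proof. rewrite /Bf !cE; ring. Qed.
Lemma Bf_lc a b p q : Bf (lc a b p) (lc a b q) =
  p.1 * q.1 * (2 * Q a) + (p.1 * q.2 + p.2 * q.1) * Bf a b + p.2 * q.2 * (2 * Q b).
Proof. rewrite /Bf /Q /lc !cE; ring. Qed.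
Lemma Q_lc a b p : Q (lc a b p) = p.1 * p.1 * Q a + p.1 * p.2 * Bf a b + p.2 * p.2 * Q b.
Proof. rewrite /Bf /Q /lc !cE; ring. Qed.

Lemma basis_Q a b : basis2 a b -> 0 < Q a /\ 0 < Q b.
Proof.
move=> hb; have e := QB_id a b; have ha := Q_ge0 a; have hb' := Q_ge0 b.
have hd : det2 a b * det2 a b = 1 by case: hb => ->.
rewrite hd in e.
have : 0 < Q a * Q b by nia.
move=> h; split; nia.
Qed.

Lemma basis_B a b : basis2 a b -> Bf a b != 0.
Proof.
move=> hb; have e := QB_id a b.
have hd : det2 a b * det2 a b = 1 by case: hb => ->.
rewrite hd in e; apply/eqP => hB; rewrite hB in e; lia.
Qed.

Lemma uniq_hex a b : basis2 a b -> uniq (hex_list a b).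
Proof.
move=> hb.
have -> : hex_list a b = map (lc a b) S6.
  rewrite /= /hex_list; congr [:: _; _; _; _; _; _];
  by apply/vecP; rewrite /lc !cE /=; split; ring.
rewrite map_inj_uniq //; move=> p q; exact: lc_inj.
Qed.

Lemma F_hex a b : basis2 a b -> F (hex a b) = 2 * (Q a + Q b + Q (a + b)).
Proof.
move=> hb; rewrite /F.
have hp : perm_eq (hex a b) (hex_list a b).
  apply: uniq_perm; [exact: fset_uniq | exact: uniq_hex | move=> v; exact: mem_hex].
rewrite (perm_big _ hp) /hex_list !big_cons big_nil /= !QN addr0.
ring.
Qed.

Lemma F_flip x y : basis2 x y -> F (hex x y) = F (hex x (- y)) + 4 * Bf x y.
Proof.
move=> hb; rewrite (F_hex hb) (F_hex (basis2N hb)) QD QDN QN; ring.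
Qed.

Lemma F_adj_neq H H' : adjacent H H' -> F H != F H'.
Proof.
case/adjE=> x [y [hb [-> ->]]]; rewrite (F_flip hb).
have := basis_B hb; apply: contra => /eqP e; apply/eqP; lia.
Qed.

Lemma F_lower H H' : adjacent H H' -> F H' < F H ->
  exists x y, [/\ basis2 x y, H = hex x y, H' = hex x (- y) & 0 < Bf x y].
Proof.
case/adjE=> x [y [hb [-> ->]]]; rewrite (F_flip hb) => h.
exists x, y; split => //; lia.
Qed.

Lemma mem_hex_l a b : a \in hex a b. Proof. by rewrite memhexE; lia. Qed.
Lemma mem_hex_r a b : b \in hex a b. Proof. by rewrite memhexE; lia. Qed.
Lemma mem_hex_s a b : a + b \in hex a b. Proof. by rewrite memhexE ?cE; lia. Qed.



Lemma F_uniq_lower H H1 H2 : adjacent H H1 -> adjacent H H2 ->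
  F H1 < F H -> F H2 < F H -> H1 = H2.
Proof.
move=> a1 a2 l1 l2.
have [x1 [y1 [hb1 e1 -> B1]]] := F_lower a1 l1.
have [x2 [y2 [hb2 e2 -> B2]]] := F_lower a2 l2.
have hx : x2 \in hex x1 y1 by rewrite -e1 e2 mem_hex_l.
have hy : y2 \in hex x1 y1 by rewrite -e1 e2 mem_hex_r.
have hs : x2 + y2 \in hex x1 y1 by rewrite -e1 e2 mem_hex_s.
have [Qx Qy] := basis_Q hb1.
case/hex_lc_mem: hx hs B2 => p hp ->; case/hex_lc_mem: hy => q hq -> hs.
rewrite lcD in hs; have {hs} hpq := lc_mem hb1 hs.
rewrite Bf_lc => B2.
rewrite lcN !(lc_flip x1 y1).
move: hpq B2; s6case hp; s6case hq; move=> hpq B2.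
all: try by exfalso; move: hpq; apply/negP.
all: rewrite /= in B2.
all: try by exfalso; lia.
all: apply: hex_eq_lc; by [].
Qed.
Lemma arith_well (u v b : int) : 1 <= u -> 1 <= v -> 0 < b -> b < 2 * u -> b < 2 * v ->
  4 * (u * v) - b * b = 3 -> u = 1 /\ v = 1 /\ b = 1.
Proof.
move=> hu hv hb h1 h2 e.
have s1 : b * b <= (2 * u - 1) * b by nia.
have s2 : (2 * u - 1) * b <= (2 * u - 1) * (2 * v - 1) by nia.
have : u + v <= 2 by nia.
move=> h; have eu : u = 1 by lia. have ev : v = 1 by lia.
subst; split => //; split => //; nia.
Qed.
Lemma Qone v : Q v = 1 -> v \in W0.
Proof.
rewrite /Q /W0 in_fset /W0_list !inE !eqvE !cE => e.
have h1 : -1 <= c1 v <= 1 by nia.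
have h0 : -1 <= c0 v <= 1 by nia.
have : c0 v = -1 \/ c0 v = 0 \/ c0 v = 1 by lia.
have : c1 v = -1 \/ c1 v = 0 \/ c1 v = 1 by lia.
case=> [e1|[e1|e1]]; case=> [e0|[e0|e0]]; rewrite e0 e1 in e *; by [].
Qed.
Lemma W0_hex : W0 = hex (vec2 1 0) (vec2 0 (-1)).
Proof.
apply/fsetP=> v; rewrite /W0 in_fset memhexE /W0_list !inE !eqvE !cE.
apply/idP/idP; lia.
Qed.

Lemma adj_flip x y : basis2 x y -> adjacent (hex x y) (hex x (- y)).
Proof. by move=> hb; apply/adjE; exists x, y. Qed.

Lemma descend H : admissible H -> H = W0 \/ exists H', adjacent H H' /\ F H' < F H.
Proof.
case=> x [y [/basisP hb ->]].
have hB := basis_B hb.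
have [Qx Qy] := basis_Q hb.
case: (ltrgtP 0 (Bf x y)) => hB0; last by move: hB; rewrite -hB0 eqxx.
  right; exists (hex x (- y)); split; first exact: adj_flip.
  rewrite (F_flip hb); lia.
have ex : hex x y = hex (lc x y (1,0)) (lc x y (-1,-1)) by apply: hex_eq_lc.
have ey : hex x y = hex (lc x y (0,1)) (lc x y (-1,-1)) by apply: hex_eq_lc.
have bx : basis2 (lc x y (1,0)) (lc x y (-1,-1)).
  by rewrite /basis2 det2_lc /=; case: hb => ->; [right|left].
have by' : basis2 (lc x y (0,1)) (lc x y (-1,-1)).
  by rewrite /basis2 det2_lc /=; case: hb => ->; [left|right].
have := basis_B bx; rewrite Bf_lc /= => nbx.
have := basis_B by'; rewrite Bf_lc /= => nby.
case: (ltrP 0 (Bf (lc x y (1,0)) (lc x y (-1,-1)))) => h1.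
  right; rewrite ex; exists (hex (lc x y (1,0)) (- lc x y (-1,-1))); split.
    exact: adj_flip.
  rewrite (F_flip bx); lia.
case: (ltrP 0 (Bf (lc x y (0,1)) (lc x y (-1,-1)))) => h2.
  right; rewrite ey; exists (hex (lc x y (0,1)) (- lc x y (-1,-1))); split.
    exact: adj_flip.
  rewrite (F_flip by'); lia.
rewrite !Bf_lc /= in h1 h2.
have e := QB_id x y.
have hd : det2 x y * det2 x y = 1 by case: hb => ->.
rewrite hd in e.
have [eu [ev eb]] : Q x = 1 /\ Q y = 1 /\ - Bf x y = 1.
  apply: arith_well; try lia.
have hxy : Q (x + y) = 1 by rewrite QD; lia.
left.
have hb0 : basis2 (vec2 1 0) (vec2 0 (-1)) by right; rewrite /det2 !cE.
have [n1 n2] := basis2_neq hb.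
have qx : x \in hex (vec2 1 0) (vec2 0 (-1)) by rewrite -W0_hex; exact: Qone.
have qy : y \in hex (vec2 1 0) (vec2 0 (-1)) by rewrite -W0_hex; exact: Qone.
have [_ [e0|e0]] := hexK hb0 qx qy n1 n2.
  by rewrite -e0 W0_hex.
have := Qone hxy; rewrite W0_hex e0.
have -> : x + y = lc x (- y) (1, -1) by apply/vecP; rewrite /lc !cE /=; split; ring.
by move/(lc_mem (basis2N hb)).
Qed.


Lemma act_hex (M : 'M[int]_2) a b : act M (hex a b) = hex (M *m a) (M *m b).
Proof.
apply/fsetP => v; apply/imfsetP/idP.
  case=> w /= hw ->; move: hw; rewrite mem_hex /hex_list !in_cons in_nil orbF.
  case/orP=> [/eqP->|/orP[/eqP->|/orP[/eqP->|/orP[/eqP->|/orP[/eqP->|/eqP->]]]]];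
  rewrite ?mulmxN ?mulmxDr memhexE ?cE; lia.
rewrite mem_hex /hex_list !in_cons in_nil orbF.
case/orP=> [/eqP->|/orP[/eqP->|/orP[/eqP->|/orP[/eqP->|/orP[/eqP->|/eqP->]]]]].
- by exists a => //=; rewrite mem_hex_l.
- by exists (- a); rewrite ?mulmxN //=; apply: hexN; rewrite mem_hex_l.
- by exists b => //=; rewrite mem_hex_r.
- by exists (- b); rewrite ?mulmxN //=; apply: hexN; rewrite mem_hex_r.
- by exists (a + b); rewrite ?mulmxDr //=; rewrite mem_hex_s.
- by exists (- (a + b)); rewrite ?mulmxN ?mulmxDr //=; apply: hexN; rewrite mem_hex_s.
Qed.

Lemma act_mul (M N : 'M[int]_2) H : act M (act N H) = act (M *m N) H.
Proof.
apply/fsetP => v; apply/imfsetP/imfsetP.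
  case=> w /= /imfsetP [u /= hu ->] ->; exists u => //; by rewrite mulmxA.
case=> u /= hu ->; exists (N *m u); last by rewrite mulmxA.
by apply/imfsetP; exists u.
Qed.

Lemma act1 H : act 1%:M H = H.
Proof.
apply/fsetP => v; apply/imfsetP/idP.
  by case=> w /= hw ->; rewrite mul1mx.
by move=> hv; exists v => //; rewrite mul1mx.
Qed.



Lemma det2_mul (M : 'M[int]_2) a b : det2 (M *m a) (M *m b) = \det M * det2 a b.
Proof. rewrite det22 /det2 !cE; ring. Qed.

Lemma SL2_basis M a b : SL2 M -> basis2 a b -> basis2 (M *m a) (M *m b).
Proof. by rewrite /SL2 /basis2 det2_mul => ->; rewrite !mul1r. Qed.

Lemma adj_act M H H' : SL2 M -> adjacent H H' -> adjacent (act M H) (act M H').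
Proof.
move=> hM /adjE [x [y [hb [-> ->]]]]; apply/adjE.
exists (M *m x), (M *m y); split; first exact: SL2_basis.
by rewrite !act_hex mulmxN.
Qed.

Lemma adm_act M H : SL2 M -> admissible H -> admissible (act M H).
Proof.
move=> hM [x [y [/basisP hb ->]]]; exists (M *m x), (M *m y).
by rewrite act_hex; split => //; apply/basisP; apply: SL2_basis.
Qed.

Lemma SL2_unit M : SL2 M -> M \in unitmx.
Proof. by rewrite /SL2 unitmxE => ->; rewrite unitr1. Qed.

Lemma SL2_inv M : SL2 M -> SL2 (invmx M).
Proof. by move=> h; rewrite /SL2 det_inv h invr1. Qed.

Lemma act_invK M H : SL2 M -> act (invmx M) (act M H) = H.
Proof. by move=> h; rewrite act_mul mulVmx ?act1 //; apply: SL2_unit. Qed.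

Lemma act_Kinv M H : SL2 M -> act M (act (invmx M) H) = H.
Proof. by move=> h; rewrite act_mul mulmxV ?act1 //; apply: SL2_unit. Qed.

Lemma act_inj M H H' : SL2 M -> act M H = act M H' -> H = H'.
Proof. by move=> h e; rewrite -(act_invK H h) e act_invK. Qed.

Definition mk2 (u v : vec) : 'M[int]_2 := \matrix_(i, j) (if j == 0 then u i 0 else v i 0).

Lemma mk2_e1 u v : mk2 u v *m vec2 1 0 = u.
Proof. apply/vecP; rewrite !cE /mk2 /c0 /c1 !mxE /=; split; ring. Qed.
Lemma mk2_e2 u v : mk2 u v *m vec2 0 (-1) = - v.
Proof. apply/vecP; rewrite !cE /mk2 /c0 /c1 !mxE /=; split; ring. Qed.
Lemma mk2_det u v : \det (mk2 u v) = det2 u v.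
Proof. rewrite det22 /mk2 /det2 /c0 /c1 !mxE /=; ring. Qed.

Lemma trans_SL2 H : admissible H -> exists B, SL2 B /\ act B W0 = H.
Proof.
case=> x [y [/basisP hb ->]].
case: hb => hd.
  exists (mk2 y (- x)); split.
    by rewrite /SL2 mk2_det det2N -hd /det2; ring.
  rewrite W0_hex act_hex mk2_e1 mk2_e2 opprK.
  have e := @hex_eq_lc x y (0,1) (1,0) erefl.
  by rewrite lc10 lc01 in e.
exists (mk2 x (- y)); split.
  by rewrite /SL2 mk2_det det2N hd opprK.
by rewrite W0_hex act_hex mk2_e1 mk2_e2 opprK.
Qed.


Definition adjb (H H' : hexagon) : bool :=
  if excluded_middle_informative (adjacent H H') then true else false.

Lemma adjbP H H' : reflect (adjacent H H') (adjb H H').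
Proof. by rewrite /adjb; case: excluded_middle_informative => h; constructor. Qed.

Lemma adj_sym H H' : adjacent H H' -> adjacent H' H.
Proof.
case=> [h1 [h2 [h3 [s [m [n1 [n2 [a1 [a2 [a3 [a4 [a5 [a6 [a7 a8]]]]]]]]]]]]]].
split=> //; split=> //; split; first by move=> e; apply: h3.
by exists s, m.
Qed.

Lemma adjb_sym H H' : adjb H H' = adjb H' H.
Proof. by apply/adjbP/adjbP; apply: adj_sym. Qed.

Lemma adjb_irr H : adjb H H = false.
Proof. by apply/adjbP => -[_ [_ [h _]]]. Qed.

Lemma F_adjb H H' : adjb H H' -> F H != F H'.
Proof. by move/adjbP; apply: F_adj_neq. Qed.

Lemma F_lowb H H1 H2 : adjb H H1 -> adjb H H2 -> F H1 < F H -> F H2 < F H -> H1 = H2.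
Proof. by move=> /adjbP a1 /adjbP a2; apply: F_uniq_lower. Qed.

Fixpoint nb (s : seq hexagon) : bool :=
  match s with
  | x :: ((_ :: z :: _) as s') => (x != z) && nb s'
  | _ => true
  end.

Lemma nb_tail x s : nb (x :: s) -> nb s.
Proof. by case: s => [|y [|z s]] //= /andP[]. Qed.

Lemma nb_prefix s1 s2 : nb (s1 ++ s2) -> nb s1.
Proof.
elim: s1 => [|x [|y [|z s1]] IH] //= /andP[-> h] /=.
by apply: IH.
Qed.

(* lower neighbour is unique: a step up is followed by steps up *)
Lemma inc_walk s x y : path adjb x (y :: s) -> nb (x :: y :: s) -> F x < F y ->
  F y <= F (last y s).
Proof.
elim: s x y => [|z s IH] x y /=; first by [].
case/and3P=> axy ayz pz /andP[nxz nbs] lt.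
have lyz : F y < F z.
  have := F_adjb ayz; rewrite neq_lt => /orP[//|lzy].
  have ayx : adjb y x by rewrite adjb_sym.
  have e := F_lowb ayx ayz lt lzy.
  by rewrite e eqxx in nxz.
apply: le_trans (ltW lyz) _; apply: (IH y z) => //=; exact/andP.
Qed.

Lemma dec_walk s x y : path adjb x (y :: s) -> nb (x :: y :: s) ->
  F (last y s) < F (last x (belast y s)) -> F y < F x /\ F (last y s) < F x.
Proof.
elim: s x y => [|z s IH] x y /=; first by move=> _ _ h; split.
case/and3P=> axy ayz pz /andP[nxz nbs] lt.
have [lzy lly] := IH y z (introT andP (conj ayz pz)) nbs lt.
have lyx : F y < F x.
  have := F_adjb axy; rewrite neq_lt => /orP[lxy|//].
  have ayx : adjb y x by rewrite adjb_sym.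
  have e := F_lowb ayx ayz lxy lzy.
  by rewrite e eqxx in nxz.
split => //; exact: lt_trans lly lyx.
Qed.

Lemma closed_nb n s u : (size s <= n)%N -> path adjb u s -> nb (u :: s) -> last u s = u -> s = [::].
Proof.
elim: n s u => [|n IH] [|y s'] u //= hn.
case/andP=> auy ps nbs hl.
have lyu : F y < F u.
  have := F_adjb auy; rewrite neq_lt => /orP[luy|//].
  have := inc_walk (introT andP (conj auy ps)) nbs luy.
  by rewrite hl => /(lt_le_trans luy); rewrite ltxx.
case/lastP: s' hn ps nbs hl => [|mid w] hn ps nbs hl.
  by move: auy; rewrite /= in hl; rewrite hl adjb_irr.
rewrite last_rcons in hl; subst w.
move: ps; rewrite rcons_path => /andP[pm apu].
have lpu : F (last y mid) < F u.
  have := F_adjb apu; rewrite neq_lt => /orP[//|lup].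
  have pyr : path adjb y (rcons mid u) by rewrite rcons_path pm apu.
  have := @dec_walk (rcons mid u) u y.
  rewrite /= auy pyr => /(_ isT nbs); rewrite last_rcons belast_rcons /= => /(_ lup) [_].
  by rewrite ltxx.
have e : y = last y mid.
  apply: (F_lowb auy _ lyu lpu); by rewrite adjb_sym.
have nbm : nb (y :: mid).
  by apply: (@nb_prefix _ [:: u]); rewrite cats1 rcons_cons; exact: (@nb_tail u (y :: rcons mid u) nbs).
have := IH mid y _ pm nbm (esym e).
rewrite size_rcons in hn.
move=> /(_ (leq_trans (leqnSn _) hn)) hm; subst mid.
by move: nbs; rewrite /= eqxx.
Qed.

Lemma closed_nb' s u : path adjb u s -> nb (u :: s) -> last u s = u -> s = [::].
Proof. exact: (@closed_nb (size s)). Qed.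

Lemma nb_shortest t u p : path adjb u p -> nb (u :: p) -> path adjb u t ->
  last u p = last u t -> (size p <= size t)%N.
Proof.
elim: t u p => [|u1 t IH] u p pp nbp pt hl.
  by rewrite (closed_nb' pp nbp hl).
case: p pp nbp hl => [|p1 p] //= pp nbp hl.
move: pt => /= /andP[auu1 pt].
case: (eqVneq p1 u1) => [e|ne].
  subst p1; move: pp => /andP[_ pp].
  exact: (IH u1 p pp (@nb_tail u (u1 :: p) nbp) pt hl).
have h1 : path adjb u1 (u :: p1 :: p).
  by rewrite [path _ _ (u :: _)]/= adjb_sym auu1; exact: pp.
have h2 : nb (u1 :: u :: p1 :: p) by rewrite /= eq_sym ne; exact: nbp.
have := IH u1 (u :: p1 :: p) h1 h2 pt hl.
by move=> h /=; move: h; rewrite /=; lia.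
Qed.

Lemma reduce t u : path adjb u t -> exists p,
  [/\ path adjb u p, nb (u :: p), last u p = last u t, (size p <= size t)%N &
      odd (size p) = odd (size t) /\ (size p = size t -> p = t)].
Proof.
elim: t u => [|u1 t IH] u; first by exists [::].
move=> /= /andP[auu1 pt].
have [p' [pp' nbp' hl' hs' [ho' he']]] := IH u1 pt.
case: p' pp' nbp' hl' hs' ho' he' => [|x p''] pp' nbp' hl' hs' ho' he'.
  exists [:: u1]; split; [ | | | | split ].
  - by rewrite /= auu1.
  - by [].
  - by rewrite -hl'.
  - by [].
  - by rewrite /= -ho'.
  - by move=> [e]; rewrite -he'.
case: (eqVneq x u) => [exu|nxu].
  subst x; exists p''; split; [ | | | | split ].
  - by move: pp' => /= /andP[].
  - exact: (@nb_tail u1 (u :: p'') nbp').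
  - by rewrite -hl'.
  - by move: hs' => /=; lia.
  - by move: ho' => /=; case: (odd (size p'')); case: (odd (size t)).
  - by move: hs' => /= hs e; lia.
exists (u1 :: x :: p''); split; [ | | | | split ].
- by rewrite /= auu1; exact: pp'.
- by rewrite /= eq_sym nxu; exact: nbp'.
- by rewrite -hl'.
- by move: hs' => /=; lia.
- by rewrite /=; move: ho' => /= ->.
- by move=> [e]; rewrite he'.
Qed.

Lemma even_closed t u : path adjb u t -> last u t = u -> ~~ odd (size t).
Proof.
move=> pt hl; have [p [pp nbp hlp _ [ho _]]] := reduce pt.
rewrite -ho (closed_nb' pp nbp) //; by rewrite hlp.
Qed.

Lemma geodesic_nb H p t : path adjb H t -> path adjb H p -> last H p = last H t ->
  (forall q, path adjb H q -> last H q = last H t -> (size t <= size q)%N) -> nb (H :: t).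
Proof.
move=> pt _ _ hmin.
have [q [pq nbq hlq hs [_ he]]] := reduce pt.
have := hmin q pq hlq => h.
by rewrite -(he _); [exact: nbq | apply/eqP; rewrite eqn_leq hs h].
Qed.

Lemma F_ge0 H : 0 <= F H.
Proof. by rewrite /F; apply: sumr_ge0 => v _; apply: Q_ge0. Qed.

Lemma connect_W0 H : admissible H -> exists s, path adjb W0 s /\ last W0 s = H.
Proof.
move=> hH.
suff : forall n : nat, forall H, admissible H -> F H <= n%:Z ->
         exists s, path adjb W0 s /\ last W0 s = H.
  by move=> /(_ `|F H|%N H hH); rewrite gez0_abs ?F_ge0 //; apply.
elim=> [|n IH] {hH} H hH hn.
  case: (descend hH) => [->|[H' [a l]]]; first by exists [::].
  by have := F_ge0 H'; lia.
case: (descend hH) => [->|[H' [a l]]]; first by exists [::].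
have hH' : admissible H' by case: a => [_ []].
have hn' : F H' <= n%:Z by move: hn l; rewrite -addn1 PoszD; lia.
have [s [ps ls]] := IH H' hH' hn'.
exists (rcons s H); split; last by rewrite last_rcons.
by rewrite rcons_path ps ls adjb_sym; apply/adjbP.
Qed.

Lemma rev_walk x s : path adjb x s -> path adjb (last x s) (rev (belast x s)).
Proof.
move=> p; rewrite rev_path; apply: sub_path p => a b.
by rewrite adjb_sym.
Qed.

Lemma last_rev_belast (x : hexagon) (s : seq hexagon) : last (last x s) (rev (belast x s)) = x.
Proof.
case: s => [|y s] //=; by rewrite rev_cons last_rcons.
Qed.

Lemma connect_W0' H : admissible H -> exists s, path adjb H s /\ last H s = W0.
Proof.
move=> /connect_W0 [s [ps ls]]; exists (rev (belast W0 s)).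
by rewrite -ls; split; [exact: rev_walk | exact: last_rev_belast].
Qed.


Lemma map_walk M x s : SL2 M -> path adjb x s -> path adjb (act M x) (map (act M) s).
Proof.
move=> hM; elim: s x => [|y s IH] x //= /andP[a p].
rewrite IH // andbT; apply/adjbP; apply: adj_act => //; exact/adjbP.
Qed.

Lemma nb3 (x y z : hexagon) s : nb (x :: y :: z :: s) = (x != z) && nb (y :: z :: s).
Proof. by []. Qed.

Lemma nb_map M s : SL2 M -> nb (map (act M) s) = nb s.
Proof.
move=> hM; elim: s => [|x s IH] //; case: s IH => [|y [|z s]] IH //.
rewrite map_cons (map_cons _ y) (map_cons _ z) nb3 nb3 -IH.
by rewrite (inj_eq (fun H H2 => @act_inj M H H2 hM)).
Qed.

Lemma nb_cat (x : hexagon) s1 z w s2 : nb (x :: rcons s1 z) -> nb (z :: w :: s2) ->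
  last x s1 != w -> nb (x :: rcons s1 z ++ w :: s2).
Proof.
elim: s1 x => [|y s1 IH] x.
  move=> _ h2 h3; change (nb (x :: z :: w :: s2)); rewrite nb3 h2 andbT; exact: h3.
move=> h1 h2 h3.
have IH' := IH y (nb_tail h1) h2 h3.
move: h1 IH'; rewrite rcons_cons cat_cons.
case e: (rcons s1 z) => [|h t]; first by move: e; case: (s1) => [|? ?].
by rewrite cat_cons !nb3 => /andP[-> _] ->.
Qed.

Lemma walk_path H s : walk H s <-> admissible H /\ path adjb H s.
Proof.
split=> -[hH hs]; split => //.
  by apply/(pathP H) => i hi; apply/adjbP; exact: hs i hi.
by move=> i hi; apply/adjbP; move/(pathP H): hs; apply.
Qed.

Lemma walk_betweenP H H' s : walk_between H H' s <->
  [/\ admissible H, path adjb H s & last H s = H'].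
Proof.
split; first by case=> /walk_path [? ?] ?; split.
by case=> ? ? ?; split => //; apply/walk_path.
Qed.

Fixpoint iw (A : 'M[int]_2) (V : seq hexagon) (n : nat) : seq hexagon :=
  match n with 0 => [::] | n'.+1 => V ++ map (act A) (iw A V n') end.

Lemma iw_path A V X n : SL2 A -> path adjb X V -> last X V = act A X ->
  path adjb X (iw A V n) /\ last X (iw A V n) = iter n (act A) X.
Proof.
move=> hA pV lV; elim: n => [|n [IHp IHl]] //=.
rewrite cat_path pV lV map_walk // last_cat lV last_map IHl; split => //.
Qed.

Lemma iwS A V n : iw A V n.+1 = V ++ map (act A) (iw A V n).
Proof. by []. Qed.

Lemma iw_size A V n : size (iw A V n) = (n * size V)%N.
Proof. elim: n => //= n IH; by rewrite size_cat size_map IH mulSn. Qed.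

Lemma iw_nb A X y mid z n : SL2 A -> last X (y :: rcons mid z) = act A X ->
  nb (X :: y :: rcons mid z) -> last y mid != act A y ->
  nb (X :: iw A (y :: rcons mid z) n).
Proof.
move=> hA hl hnb hj; elim: n => [|n IH] //.
case: n IH => [|n] IH.
  by rewrite /= cats0.
have hz : z = act A X by rewrite -hl /= last_rcons.
set L := iw A (y :: rcons mid z) n.+1.
have eL : map (act A) L = act A y :: map (act A) (behead L) by rewrite /L iwS.
rewrite iwS -/L eL -rcons_cons.
apply: nb_cat => //.
by rewrite hz -eL -map_cons nb_map.
Qed.

Lemma iter_walk A n x s : SL2 A -> path adjb x s ->
  path adjb (iter n (act A) x) (map (iter n (act A)) s).
Proof.
move=> hA; elim: n x s => [|n IH] x s p /=; first by rewrite map_id.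
have -> : map (fun y => act A (iter n (act A) y)) s = map (act A) (map (iter n (act A)) s).
  by rewrite -map_comp.
exact: map_walk (IH _ _ p).
Qed.


Lemma adm_W0 : admissible W0.
Proof.
exists (vec2 1 0), (vec2 0 (-1)); split; last exact: W0_hex.
by apply/basisP; right; rewrite /det2 !cE.
Qed.

Lemma no_fix1 A V X : SL2 A -> path adjb W0 V -> last W0 V = act A W0 -> size V = 1%N ->
  admissible X -> act A X <> X.
Proof.
move=> hA pV lV sV hX eX.
have [R [pR lR]] := connect_W0 hX.
have [R' [pR' lR']] := connect_W0' hX.
have e1 := @even_closed (R ++ R') W0.
rewrite cat_path pR lR pR' last_cat lR lR' size_cat in e1.
have e2 := @even_closed (V ++ map (act A) R ++ R') W0.
rewrite !cat_path pV lV map_walk // last_map lR eX pR' !last_cat lV last_map lR eX lR' in e2.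
rewrite !size_cat size_map sV in e2.
have := e1 isT erefl; have := e2 isT erefl.
by rewrite oddD /=; case: (odd _).
Qed.

Lemma lower_bound A V X q : SL2 A -> path adjb W0 V -> last W0 V = act A W0 ->
  (forall n, nb (W0 :: iw A V n)) -> admissible X ->
  path adjb X q -> last X q = act A X -> (size V <= size q)%N.
Proof.
move=> hA pV lV hnb hX pq lq.
have [R [pR lR]] := connect_W0 hX.
have [R' [pR' lR']] := connect_W0' hX.
pose n := (size R + size R').+1.
have en : n = (size R + size R').+1 by [].
clearbody n.
have [pP lP] := @iw_path A V W0 n hA pV lV.
have [pQ lQ] := @iw_path A q X n hA pq lq.
set Wt := R ++ iw A q n ++ map (iter n (act A)) R'.
have pW : path adjb W0 Wt.
  by rewrite /Wt !cat_path pR lR pQ lQ (iter_walk n hA pR').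
have lW : last W0 Wt = last W0 (iw A V n).
  by rewrite /Wt !last_cat lR lQ last_map lR' lP.
have := nb_shortest pP (hnb n) pW (esym lW).
rewrite /Wt !size_cat size_map !iw_size en.
move=> h; rewrite leqNgt; apply/negP => hlt.
have : ((size R + size R').+1 * size q <= (size R + size R').+1 * (size V).-1)%N.
  by apply: leq_mul => //; move: hlt; case: (size V) => //.
move: h; case: (size V) hlt => // m hlt /=.
nia.
Qed.


Lemma penult (y : hexagon) mid z :
  nth W0 (W0 :: y :: rcons mid z) (size (y :: rcons mid z)).-1 = last y mid.
Proof.
rewrite /= size_rcons /= -rcons_cons nth_rcons /= ltnS leqnn.
have := nth_last W0 (y :: mid); by rewrite /=.
Qed.

Lemma conj_last A B : SL2 B ->
  act B (act (invmx B *m A *m B) W0) = act A (act B W0).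
Proof.
move=> hB; rewrite !act_mul !mulmxA mulmxV ?mul1mx //; exact: SL2_unit.
Qed.

Theorem theorem7 (A : 'M[int]_2) (V : seq hexagon) :
  SL2 A ->
  geodesic W0 (act A W0) V ->
  let m := size V in
  let Vi := fun i => nth W0 (W0 :: V) i in
  ((m <= 1)%N -> minimal A) /\
  ((1 < m)%N -> (minimal A <-> Vi m.-1 <> act A (Vi 1%N))).
Proof.
move=> hA [hw hmin]; cbv zeta.
have [_ pV lV] := (walk_betweenP _ _ _).1 hw.
have hmin' : forall q, path adjb W0 q -> last W0 q = act A W0 -> (size V <= size q)%N.
  move=> q pq lq; apply: hmin; apply/walk_betweenP; split => //; exact: adm_W0.
have nbV : nb (W0 :: V).
  apply: (geodesic_nb pV pV erefl) => q pq lq; apply: hmin' => //; by rewrite lq.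
have minimal_of : (forall X q, admissible X -> path adjb X q -> last X q = act A X ->
    (size V <= size q)%N) -> minimal A.
  move=> hb B hB t /walk_betweenP [_ pt lt]; exists V; split => //.
  rewrite -(size_map (act B) t); apply: (hb (act B W0) (map (act B) t)).
  - exact: adm_act hB adm_W0.
  - exact: map_walk hB pt.
  - by rewrite last_map lt conj_last.
split.
  move=> hm; apply: minimal_of => X q hX pq lq.
  case hs: (size V) hm => [|[|//]] // _.
  case: q pq lq => [|x q] //= _ lq.
  by case: (no_fix1 hA pV lV hs hX).
case: V hw hmin hmin' nbV pV lV minimal_of => [|y V1] //.
case/lastP: V1 => [|mid z] //.
rewrite -/(size (y :: rcons mid z)) penult /= => hw hmin hmin' nbV pV lV minimal_of _.
split.
  move=> hmn e.
  have hy : admissible y.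
    by move: pV => /andP[/adjbP [_ [? _]] _].
  have [B [hB eB]] := trans_SL2 hy.
  move: pV => /andP[_]; rewrite rcons_path => /andP[pm _].
  have := hmn B hB (map (act (invmx B)) mid).
  case.
    apply/walk_betweenP; split; first exact: adm_W0.
      by rewrite -{1}(act_invK W0 hB) eB; apply: map_walk => //; exact: SL2_inv.
    rewrite -{1}(act_invK W0 hB) eB last_map e -eB.
    by rewrite !act_mul.
  move=> s [/walk_betweenP [_ ps ls] hs].
  have := hmin' s ps ls.
  by rewrite size_map in hs; move: hs; rewrite /= size_rcons; lia.
move=> hj; apply: minimal_of => X q hX pq lq.
apply: (@lower_bound A (y :: rcons mid z) X q hA pV lV) => // n.
apply: iw_nb => //; exact/eqP.
Qed.
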